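(* Let $R$ be a commutative principal ideal domain which is not a field and has at most countably many primes (up to associates), and let $K$ be its field of fractions. Let $(M_\alpha,\varphi_{\alpha\beta})$ be an inverse system, indexed by a countable upward directed poset, of injective $R$-modules and surjective homomorphisms, with inverse limit $M$. Then for every index $\alpha$, the submodule of $M$ spanned by the images of all $R$-module homomorphisms $K\to M$ maps surjectively onto $M_\alpha$ under the canonical projection $M\to M_\alpha$.
   Context: Rings are associative with unit, modules are unital. *)

(* Defs.v *)
From HB Require Import structures.
From mathcomp Require Import all_boot all_order all_algebra fraction.
Set Implicit Arguments. Unset Strict Implicit. Unset Printing Implicit Defensive.
Import Order.TTheory GRing.Theory Num.Theory.
Local Open Scope ring_scope.

Definition rdivides (R : comNzRingType) (a b : R) : Prop := exists c : R, b = c * a.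

Definition is_ideal (R : comNzRingType) (P : R -> Prop) : Prop :=
  [/\ P 0, (forall x y, P x -> P y -> P (x + y)) & (forall r x, P x -> P (r * x))].

Definition is_PID (R : idomainType) : Prop :=
  forall P : R -> Prop, is_ideal P -> exists a : R, forall x, P x <-> rdivides a x.

Definition is_field_ring (R : idomainType) : Prop :=
  forall x : R, x != 0 -> x \is a GRing.unit.

Definition is_prime_elt (R : idomainType) (p : R) : Prop :=
  [/\ p != 0, p \isn't a GRing.unit &
      forall a b : R, rdivides p (a * b) -> rdivides p a \/ rdivides p b].

Definition associated (R : idomainType) (p q : R) : Prop :=
  exists2 u : R, u \is a GRing.unit & p = u * q.

Definition countably_many_primes (R : idomainType) : Prop :=
  exists f : nat -> R, forall p : R, is_prime_elt p -> exists n, associated p (f n).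

(* injective R-module: every R-linear map from a submodule (given by an injective
   linear map) extends *)
Definition injective_module (R : idomainType) (E : lmodType R) : Prop :=
  forall (A B : lmodType R) (i : {linear A -> B}) (f : {linear A -> E}),
    injective i -> exists g : {linear B -> E}, forall a, g (i a) = f a.

(* R-linear maps out of the fraction field K = {fraction R}, where R acts on K
   through the embedding r |-> r%:F *)
Definition Rlinear_from_frac (R : idomainType) (V : lmodType R)
  (g : {fraction R} -> V) : Prop :=
  (forall x y, g (x + y) = g x + g y) /\
  (forall (r : R) x, g (@FracField.tofrac R r * x) = r *: g x).

Definition Rlinear (R : idomainType) (V W : lmodType R) (g : V -> W) : Prop :=
  (forall x y, g (x + y) = g x + g y) /\ (forall (r : R) x, g (r *: x) = r *: g x).

(* inverse system over the poset I (with order <=), of modules M a with maps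
   phi a b : M b -> M a for a <= b *)
Definition inverse_system (R : idomainType) (d : Order.disp_t) (I : porderType d)
  (M : I -> lmodType R) (phi : forall a b : I, M b -> M a) : Prop :=
  [/\ forall a b, (a <= b)%O -> Rlinear (phi a b),
      forall a (x : M a), phi a a x = x &
      forall a b c (x : M c), (a <= b)%O -> (b <= c)%O -> phi a b (phi b c x) = phi a c x].

(* elements of the inverse limit: compatible threads *)
Definition thread (R : idomainType) (d : Order.disp_t) (I : porderType d)
  (M : I -> lmodType R) (phi : forall a b : I, M b -> M a) (x : forall a, M a) : Prop :=
  forall a b, (a <= b)%O -> phi a b (x b) = x a.

(* R-homomorphisms K -> lim M: maps into the product of the M a, landing in the
   threads, R-linear in each coordinate *)
Definition hom_frac_to_limit (R : idomainType) (d : Order.disp_t) (I : porderType d)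
  (M : I -> lmodType R) (phi : forall a b : I, M b -> M a)
  (f : {fraction R} -> forall a, M a) : Prop :=
  (forall k, thread phi (f k)) /\ (forall a, Rlinear_from_frac (fun k => f k a)).

(* Main.v *)
Require Import Defs.
From HB Require Import structures.
From mathcomp Require Import all_boot all_order all_algebra fraction generic_quotient.
From Stdlib Require Import ClassicalEpsilon Classical.
Import Order.TTheory GRing.Theory Num.Theory.
Set Implicit Arguments. Unset Strict Implicit. Unset Printing Implicit Defensive.
Local Open Scope ring_scope.

Section Alg.
Variable R : idomainType.
Implicit Types a b c : R.

Lemma rd_refl a : rdivides a a. Proof. by exists 1; rewrite mul1r. Qed.
Lemma rd_trans a b c : rdivides a b -> rdivides b c -> rdivides a c.
Proof. by move=> [x ->] [y ->]; exists (y * x); rewrite mulrA. Qed.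
Lemma rd_mulr a b c : rdivides a b -> rdivides a (c * b).
Proof. by move=> [x ->]; exists (c * x); rewrite mulrA. Qed.
Lemma rd_mull a b c : rdivides a b -> rdivides a (b * c).
Proof. by rewrite mulrC; apply: rd_mulr. Qed.
Lemma rd_mul a b c d : rdivides a b -> rdivides c d -> rdivides (a * c) (b * d).
Proof. by move=> [x ->] [y ->]; exists (x * y); rewrite mulrACA. Qed.
Lemma rd_unit a b : a \is a GRing.unit -> rdivides a b.
Proof. by move=> ua; exists (b / a); rewrite divrK. Qed.

Variable f : nat -> R.
Definition gg i := if f i == 0 then 1 else f i.
Fixpoint vv n := match n with 0 => 1 | S n => vv n * gg n end.
Definition uu n := vv n.+1.
Fixpoint tt n := match n with 0 => 1 | S n => tt n * uu n end.
Fixpoint qq n d := match d with 0 => 1 | S d => qq n d * uu (n + d) end.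

Lemma gg_neq0 i : gg i != 0.
Proof. by rewrite /gg; case: ifPn => // _; exact: oner_neq0. Qed.
Lemma vv_neq0 n : vv n != 0.
Proof. by elim: n => [|n IH] /=; [exact: oner_neq0 | rewrite mulf_neq0 ?gg_neq0]. Qed.
Lemma uu_neq0 n : uu n != 0. Proof. exact: vv_neq0. Qed.
Lemma tt_neq0 n : tt n != 0.
Proof. by elim: n => [|n IH] /=; [exact: oner_neq0 | rewrite mulf_neq0 ?uu_neq0]. Qed.
Lemma qq_neq0 n d : qq n d != 0.
Proof. by elim: d => [|d IH] /=; [exact: oner_neq0 | rewrite mulf_neq0 ?uu_neq0]. Qed.

Lemma gg_vv i n : (i < n)%N -> rdivides (gg i) (vv n).
Proof.
elim: n => // n IH; rewrite ltnS leq_eqVlt => /orP [/eqP -> | /IH h] /=.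
  by apply: rd_mulr; apply: rd_refl.
by apply: rd_mull.
Qed.
Lemma vv_mono n k : rdivides (vv n) (vv (n + k)).
Proof. elim: k => [|k IH]; first by rewrite addn0; apply: rd_refl.
by rewrite addnS /=; apply: rd_mull. Qed.
Lemma uu_mono n k : rdivides (uu n) (uu (n + k)).
Proof. by rewrite /uu -addSn; apply: vv_mono. Qed.
Lemma tt_add n m : tt (n + m) = tt n * qq n m.
Proof. by elim: m => [|m IH]; rewrite ?addn0 ?mulr1 // addnS /= IH mulrA. Qed.
Lemma tt_qq n m : rdivides (tt m) (qq n m).
Proof.
elim: m => [|m IH] /=; first exact: rd_refl.
by apply: rd_mul => //; rewrite addnC; apply: uu_mono.
Qed.

Definition DD b := exists n, rdivides b (tt n).
Lemma DD_mul a b : DD a -> DD b -> DD (a * b).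
Proof.
move=> [n ha] [m hb]; exists (n + m); rewrite tt_add.
by apply: rd_mul => //; apply: rd_trans hb (tt_qq n m).
Qed.
Lemma DD_unit a : a \is a GRing.unit -> DD a.
Proof. by move=> ua; exists 0%N; apply: rd_unit. Qed.

Hypothesis hPID : is_PID R.
Hypothesis hprimes : forall p : R, is_prime_elt p -> exists n, associated p (f n).

Lemma DD_prime p : is_prime_elt p -> DD p.
Proof.
move=> hp; have [i [w uw pe]] := hprimes hp.
case: hp => p0 _ _; rewrite pe in p0 *.
have fi0 : f i != 0 by move: p0; apply: contraNneq => ->; rewrite mulr0.
apply: DD_mul; first exact: DD_unit.
exists i.+1; rewrite /= ; apply: rd_mulr; rewrite /uu.
by have := gg_vv (ltnSn i); rewrite /gg (negbTE fi0).
Qed.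

Definition bad b := b != 0 /\ ~ DD b.

Lemma bad_step b : bad b -> exists c, exists e, bad c /\ b = e * c /\ e \isn't a GRing.unit.
Proof.
move=> [b0 nD].
have nu : b \isn't a GRing.unit by apply/negP => /DD_unit.
have np : ~ is_prime_elt b by move/DD_prime.
have [a [c [hac [na nc]]]] : exists a c, rdivides b (a * c) /\ ~ rdivides b a /\ ~ rdivides b c.
  apply: NNPP => hn; apply: np; split => // a c hac.
  apply: NNPP => h2; apply: hn; exists a, c; split => //.
  by split => h3; apply: h2; [left|right].
pose P x := exists x1 x2, x = x1 * b + x2 * a.
have iP : is_ideal P.
  split; first by exists 0, 0; rewrite !mul0r addr0.
    move=> x y [x1 [x2 ->]] [y1 [y2 ->]]; exists (x1 + y1), (x2 + y2).
    by rewrite !mulrDl addrACA.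
  move=> r x [x1 [x2 ->]]; exists (r * x1), (r * x2).
  by rewrite mulrDr !mulrA.
have [d hd] := hPID iP.
have [h bh] : rdivides d b by apply/hd; exists 1, 0; rewrite mul1r mul0r addr0.
have da : rdivides d a by apply/hd; exists 0, 1; rewrite mul1r mul0r add0r.
have [x1 [x2 dx]] : P d by apply/hd; apply: rd_refl.
have hu : h \isn't a GRing.unit.
  apply/negP => uh; apply: na; apply: rd_trans da; exists h^-1.
  by rewrite bh mulrA mulVr ?mul1r.
have du : d \isn't a GRing.unit.
  apply/negP => ud; apply: nc.
  have : rdivides b (c * d).
    rewrite dx mulrDr; case: hac => y hy.
    exists (c * x1 + x2 * y); rewrite mulrDl; congr (_ + _); first by rewrite mulrA.
    by rewrite mulrCA [c * a]mulrC hy mulrA.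
  case=> y hy; exists (y / d); rewrite -[c](mulrK ud) hy.
  by rewrite mulrAC.
have d0 : d != 0 by move: b0; rewrite bh; apply: contraNneq => ->; rewrite mulr0.
have h0 : h != 0 by move: b0; rewrite bh; apply: contraNneq => ->; rewrite mul0r.
case: (classic (DD d)) => Dd.
  case: (classic (DD h)) => Dh.
    by exfalso; apply: nD; rewrite bh; apply: DD_mul.
  by exists h, d; split => //; split => //; rewrite mulrC.
by exists d, h; split.
Qed.

Lemma all_DD b : b != 0 -> DD b.
Proof.
move=> b0; apply: NNPP => nD.
pose nxt (x : R) := epsilon (inhabits (0 : R))
   (fun c => exists e, bad c /\ x = e * c /\ e \isn't a GRing.unit).
have nxtP x : bad x -> exists e, bad (nxt x) /\ x = e * nxt x /\ e \isn't a GRing.unit.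
  by move=> bx; exact: (epsilon_spec _ _ (bad_step bx)).
pose ch k := iter k nxt b.
have chbad k : bad (ch k).
  by elim: k => [|k IH]; [split | have [e [h _]] := nxtP _ IH].
have chS k : exists e, ch k = e * ch k.+1 /\ e \isn't a GRing.unit.
  by have [e [_ h]] := nxtP _ (chbad k); exists e.
have chdiv k l : rdivides (ch (k + l)%N) (ch k).
  elim: l => [|l IH]; first by rewrite addn0; apply: rd_refl.
  apply: rd_trans IH; have [e [h _]] := chS (k + l).
  by rewrite addnS h; exists e.
pose P x := exists k, rdivides (ch k) x.
have iP : is_ideal P.
  split; first by exists 0%N, 0; rewrite mul0r.
    move=> x y [k [x1 ->]] [l [y1 ->]]; exists (k + l)%N.
    have [z1 ->] := chdiv k l; have [z2 ->] := chdiv l k.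
    by rewrite addnC; exists (x1 * z1 + y1 * z2); rewrite mulrDl !mulrA.
  by move=> r x [k hk]; exists k; apply: rd_mulr.
have [a ha] := hPID iP.
have [k hk] : P a by apply/ha; apply: rd_refl.
have hk1 : rdivides a (ch k.+1) by apply/ha; exists k.+1; apply: rd_refl.
have [e [he ue]] := chS k.
have [c hc] := rd_trans hk hk1.
have c0 : ch k.+1 != 0 by case: (chbad k.+1).
move: hc; rewrite he mulrA -{1}[ch k.+1]mul1r => /(mulIf c0) /esym h1.
by move/negP: ue; apply; apply/unitrPr; exists c; rewrite mulrC.
Qed.
End Alg.
Lemma frac_repr (R : idomainType) (x : {fraction R}) :
  exists a b : R, b != 0 /\ x = (@FracField.tofrac R a) / (@FracField.tofrac R b).
Proof.
elim/quotW: x => r.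
exists (frac r).1, (frac r).2; split; first exact: denom_ratioP.
apply: (@mulIf _ (@FracField.tofrac R (frac r).2)); first by rewrite tofrac_eq0 denom_ratioP.
rewrite divfK ?tofrac_eq0 ?denom_ratioP //.
unlock FracField.tofrac.
rewrite -[_ * _]/(FracField.mul _ _) piE /= /FracField.mulf /=.
apply/eqmodP; rewrite /= FracField.equivfE /=.
rewrite !numden_Ratio ?mulf_neq0 ?oner_neq0 ?denom_ratioP //.
by rewrite !mulr1 mulrC.
Qed.
Definition mulRo (R : idomainType) (s : R) : R^o -> R^o := fun x => s * x.
Fact mulRo_lin (R : idomainType) (s : R) : linear (mulRo s).
Proof. by move=> a u v; rewrite /mulRo /= mulrDr mulrCA. Qed.
HB.instance Definition _ (R : idomainType) (s : R) :=
  GRing.isLinear.Build R R^o R^o *:%R (mulRo s) (mulRo_lin s).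

Definition scalTo (R : idomainType) (V : lmodType R) (y : V) : R^o -> V := fun r => r *: y.
Fact scalTo_lin (R : idomainType) (V : lmodType R) (y : V) : linear (scalTo y).
Proof. by move=> a u v; rewrite /scalTo scalerDl scalerA. Qed.
HB.instance Definition _ (R : idomainType) (V : lmodType R) (y : V) :=
  GRing.isLinear.Build R R^o V *:%R (scalTo y) (scalTo_lin y).

Lemma inj_div (R : idomainType) (E : lmodType R) : injective_module E ->
  forall (s : R), s != 0 -> forall y : E, exists x : E, s *: x = y.
Proof.
move=> hE s s0 y.
have [g hg] := hE _ _ (mulRo s) (scalTo y) (mulfI s0 : injective (mulRo s)).
exists (g 1); have h := hg 1; rewrite /= /scalTo /mulRo in h.
by rewrite -linearZ -[RHS]scale1r -h.
Qed.

Fixpoint chainI (T : Type) (a : T) (ub : T -> T -> T) (el : nat -> T) (k : nat) : T :=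
  match k with 0 => a | S k => ub (chainI a ub el k) (el k) end.

Fixpoint wseq (T : Type) (a : T) (ub : T -> T -> T) (el : nat -> T) (M : T -> Type)
  (m : M a) (stp : forall k, M (chainI a ub el k) -> M (chainI a ub el k.+1)) (k : nat)
  : M (chainI a ub el k) :=
  match k with 0 => m | S k => stp k (wseq m stp k) end.

Lemma qq_shift (R : idomainType) (f : nat -> R) n d : qq f n d.+1 = uu f n * qq f n.+1 d.
Proof.
elim: d => [|d IH] /=; first by rewrite addn0 mulr1 mul1r.
by rewrite /= in IH; rewrite IH -mulrA addnS addSn.
Qed.

Local Notation tf := (@FracField.tofrac _).
Unset Implicit Arguments.

Theorem mainTheorem8 (R : idomainType)
  (hPID : is_PID R) (hnf : ~ is_field_ring R) (hprimes : countably_many_primes R)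
  (d : Order.disp_t) (I : porderType d)
  (hIcount : exists g : I -> nat, injective g)
  (hIdir : forall a b : I, exists c : I, (a <= c)%O /\ (b <= c)%O)
  (M : I -> lmodType R) (phi : forall a b : I, M b -> M a)
  (hsys : inverse_system phi)
  (hinj : forall a, injective_module (M a))
  (hsurj : forall a b, (a <= b)%O -> forall y : M a, exists x : M b, phi a b x = y) :
  forall (alpha : I) (m : M alpha),
    exists (n : nat) (fs : 'I_n -> {fraction R} -> forall a, M a)
           (ks : 'I_n -> {fraction R}),
      (forall i, hom_frac_to_limit phi (fs i)) /\
      \sum_(i < n) fs i (ks i) alpha = m.
Proof.
move=> alpha m.
case: hprimes => f hf.
case: hIcount => cd cdinj.
case: hsys => hlin hid hcomp.
have phiD a b x y : (a <= b)%O -> phi a b (x + y) = phi a b x + phi a b y.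
  by move=> ab; case: (hlin a b ab).
have phiZ a b r x : (a <= b)%O -> phi a b (r *: x) = r *: phi a b x.
  by move=> ab; case: (hlin a b ab).
have [ub hub] : exists ub : I -> I -> I, forall a b, (a <= ub a b)%O /\ (b <= ub a b)%O.
  exists (fun a b => proj1_sig (constructive_indefinite_description _ (hIdir a b))).
  by move=> a b; exact: (proj2_sig (constructive_indefinite_description _ (hIdir a b))).
have [el hel] : exists el : nat -> I, forall b, el (cd b) = b.
  exists (fun k => epsilon (inhabits alpha) (fun x => cd x = k)).
  by move=> b; apply: cdinj; apply: (epsilon_spec (inhabits alpha) (fun x => cd x = cd b)); exists b.
pose ch := chainI alpha ub el.
have chS k : (ch k <= ch k.+1)%O by case: (hub (ch k) (el k)).
have chmono j k : (j <= k)%N -> (ch j <= ch k)%O.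
  move=> jk; rewrite -(subnK jk); elim: (k - j)%N => [|e IH] //=.
  exact: le_trans IH (chS _).
have chcof b e : (b <= ch (e + (cd b).+1)%N)%O.
  apply: (le_trans _ (chmono _ _ (leq_addl e _))).
  rewrite -{1}[b]hel; exact: (hub _ _).2.
have [stp hstp] : exists stp : forall k, M (ch k) -> M (ch k.+1),
    forall k y, uu f k *: phi (ch k) (ch k.+1) (stp k y) = y.
  have H k (y : M (ch k)) : exists x : M (ch k.+1), uu f k *: phi (ch k) (ch k.+1) x = y.
    have [z hz] := inj_div (hinj (ch k)) (uu_neq0 f k) y.
    have [x hx] := hsurj _ _ (chS k) z.
    by exists x; rewrite hx.
  exists (fun k y => proj1_sig (constructive_indefinite_description _ (H k y))).
  by move=> k y; exact: (proj2_sig (constructive_indefinite_description _ (H k y))).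
pose w := wseq (M := M) m stp.
pose V n b dd : M b := qq f n dd *: phi b (ch (dd + n)%N) (w (dd + n)%N).
have Vstep n b dd : (b <= ch (dd + n)%N)%O -> V n b dd = V n b dd.+1.
  move=> hb; rewrite /V /=.
  have h1 := hstp (dd + n)%N (w (dd + n)%N).
  by rewrite -[in LHS]h1 phiZ // hcomp // scalerA (addnC n dd).
have Vshift n b dd e : (b <= ch (dd + n)%N)%O -> V n b dd = V n b (e + dd)%N.
  move=> hb; elim: e => [|e IH] //; rewrite IH Vstep //.
  apply: le_trans hb (chmono _ _ _); by rewrite -addnA leq_addl.
pose Z n b := V n b (cd b).+1.
have Zspec n b dd : (b <= ch (dd + n)%N)%O -> Z n b = V n b dd.
  move=> hb; rewrite /Z (Vshift n b (cd b).+1 dd); last by rewrite addnC; apply: chcof.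
  by rewrite (Vshift n b dd (cd b).+1) // (addnC dd).
clearbody Z.
have Ew b k1 k2 : k1 = k2 -> phi b (ch k1) (w k1) = phi b (ch k2) (w k2) by move=> ->.
have Zthread n b c : (b <= c)%O -> phi b c (Z n c) = Z n b.
  move=> bc; rewrite (Zspec n c (cd c).+1); last by rewrite addnC; apply: chcof.
  have hc : (c <= ch ((cd c).+1 + n)%N)%O by rewrite addnC; apply: chcof.
  rewrite (Zspec n b (cd c).+1); last exact: le_trans hc.
  by rewrite /V phiZ // hcomp.
have Zdiv n b : uu f n *: Z n.+1 b = Z n b.
  have hb : (b <= ch ((cd b).+1 + n.+1)%N)%O by rewrite addnC; apply: chcof.
  rewrite (Zspec n.+1 b (cd b).+1) // (Zspec n b (cd b).+2); last by move: hb; rewrite addnS.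
  by rewrite /V scalerA -qq_shift (Ew b _ _ (addnS _ n)) (Ew b _ _ (addSn _ n)).
have Zcomb n b e : Z n b = qq f n e *: Z (e + n)%N b.
  elim: e => [|e IH]; first by rewrite scale1r.
  by rewrite IH -(Zdiv (e + n)%N) scalerA /= (addnC n e).
have tfne n : tf (tt f n) != 0 by rewrite tofrac_eq0 tt_neq0.
have fscale a b c : c != 0 -> tf (a * c) / tf (b * c) = tf a / tf b.
  move=> c0; rewrite !tofracM invfM mulrACA divff ?mulr1 //.
  by rewrite tofrac_eq0.
have trep x : exists p : nat * R, x = tf p.2 / tf (tt f p.1).
  have [a [b [b0 ->]]] := frac_repr x.
  have [n [c hc]] := all_DD hPID hf b0.
  have c0 : c != 0 by move: (tt_neq0 f n); rewrite hc; apply: contraNneq => ->; rewrite mul0r.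
  by exists (n, a * c); rewrite /= hc [c * b]mulrC fscale.
have [rep hrep] : exists rep : {fraction R} -> nat * R,
    forall x, x = tf (rep x).2 / tf (tt f (rep x).1).
  exists (fun x => proj1_sig (constructive_indefinite_description _ (trep x))).
  by move=> x; exact: (proj2_sig (constructive_indefinite_description _ (trep x))).
have wd n r n' r' b : tf r / tf (tt f n) = tf r' / tf (tt f n') -> r *: Z n b = r' *: Z n' b.
  move/eqP; rewrite eqr_div // -!tofracM tofrac_eq => /eqP E.
  wlog le : n r n' r' E / (n <= n')%N.
    move=> H; case: (leqP n n') => h; first exact: H.
    by symmetry; apply: H (esym E) (ltnW h).
  move: E; rewrite -(subnK le); set e := (n' - n)%N => E.
  rewrite (addnC e) tt_add mulrCA mulrC in E.
  have E' : r * qq f n e = r' by apply: (mulIf (tt_neq0 f n)); rewrite E.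
  by rewrite (Zcomb n b e) scalerA E' (addnC e).
pose F x b := (rep x).2 *: Z (rep x).1 b.
have Fspec x b n r : x = tf r / tf (tt f n) -> F x b = r *: Z n b.
  by move=> hx; apply: wd; rewrite -hrep.
have hom : hom_frac_to_limit phi F.
  split; first by move=> x a b ab; rewrite /F phiZ // Zthread.
  move=> a; split.
    move=> x y.
    have hx := hrep x; have hy := hrep y.
    move: hx hy; case: (rep x) => n1 r1; case: (rep y) => n2 r2 /= hx hy.
    have hx' : x = tf (r1 * qq f n1 n2) / tf (tt f (n1 + n2)).
      by rewrite tt_add fscale ?qq_neq0.
    have hy' : y = tf (r2 * qq f n2 n1) / tf (tt f (n1 + n2)).
      by rewrite addnC tt_add fscale ?qq_neq0.
    have hxy : x + y = tf (r1 * qq f n1 n2 + r2 * qq f n2 n1) / tf (tt f (n1 + n2)).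
      by rewrite {1}hx' {1}hy' tofracD mulrDl.
    by rewrite (Fspec _ _ _ _ hxy) (Fspec _ _ _ _ hx') (Fspec _ _ _ _ hy') scalerDl.
  move=> c x.
  have hx := hrep x.
  have h : tf c * x = tf (c * (rep x).2) / tf (tt f (rep x).1).
    by rewrite {1}hx tofracM mulrA.
  by rewrite (Fspec _ _ _ _ h) /F scalerA.
exists 1%N, (fun _ => F), (fun _ => 1); split; first by move=> _; exact: hom.
rewrite big_ord1.
have h1 : (1 : {fraction R}) = tf 1 / tf (tt f 0) by rewrite /= tofrac1 divr1.
rewrite (Fspec _ _ _ _ h1) scale1r (Zspec 0%N alpha 0%N) //.
by rewrite /V /= scale1r hid.
Qed.
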